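(* For $a\in(0,1]$ and $b=\sqrt{1-a^2}$, let $\gamma_a(s)=\hat\gamma_a(s)=\big(a\cos\tfrac{s}{a},a\sin\tfrac{s}{a},b\big)\in S^2$ and $y_a=\gamma_a\otimes\hat\gamma_a:(s,\hat s)\mapsto\gamma_a(s)\otimes\hat\gamma_a(\hat s)\in S^8$, $(s,\hat s)\in[0,2\pi a]^2$. Then $y_a$ is a flat torus and $W(y_a)=2\pi^2(1+a^2)$; in particular $W(y_a)>2\pi^2$ for all $a\in(0,1]$ and $W(y_a)\to 2\pi^2$ as $a\to0$.
   Context: For $x,\hat x\in\mathbb{R}^3$ the tensor product is $x\otimes\hat x=(x_i\hat x_j)_{i,j=1}^3\in\mathbb{R}^9$ (lexicographic order). For a closed immersed surface $x:M\to S^N$ with mean curvature vector $\vec H$ and Gauss curvature $K$, the Willmore functional is $W(x)=\int_M(|\vec H|^2-K+1)\,dM$. *)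

(* Defs.v *)
From Stdlib Require Import Reals Lra.
Open Scope R_scope.

(** Vectors in R^n are functions nat -> R (only indices < n matter). *)
Definition vec := nat -> R.

Fixpoint rsum (n : nat) (f : nat -> R) : R :=
  match n with O => 0 | S m => rsum m f + f m end.

Definition dot (n : nat) (u v : vec) : R := rsum n (fun k => u k * v k).

(** Tensor product x ⊗ x̂ in R^9, lexicographic order: index 3i+j ↦ x_i x̂_j. *)
Definition tensor3 (x xh : vec) : vec :=
  fun k => x (Nat.div k 3) * xh (Nat.modulo k 3).

Definition gamma_a (a : R) (s : R) : vec :=
  fun k => match k with
           | O => a * cos (s / a)
           | S O => a * sin (s / a)
           | S (S O) => sqrt (1 - a ^ 2)
           | _ => 0
           end.

Definition y_a (a : R) (s sh : R) : vec := tensor3 (gamma_a a s) (gamma_a a sh).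

Definition dS (f g : R -> R -> R) : Prop :=
  forall s t, derivable_pt_lim (fun u => f u t) s (g s t).
Definition dT (f g : R -> R -> R) : Prop :=
  forall s t, derivable_pt_lim (fun u => f s u) t (g s t).
Definition vdS (n : nat) (f g : R -> R -> vec) : Prop :=
  forall k, (k < n)%nat -> dS (fun s t => f s t k) (fun s t => g s t k).
Definition vdT (n : nat) (f g : R -> R -> vec) : Prop :=
  forall k, (k < n)%nat -> dT (fun s t => f s t k) (fun s t => g s t k).

(** Second-order jet of a parametrized surface x : R^2 -> R^n, together with
    the derivatives of the first fundamental form E, F, G that enter the
    Brioschi formula for the Gauss curvature of the induced metric. *)
Record Jets (n : nat) (x : R -> R -> vec) : Type := {
  xs : R -> R -> vec; xt : R -> R -> vec;
  xss : R -> R -> vec; xst : R -> R -> vec; xtt : R -> R -> vec;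
  Es : R -> R -> R; Et : R -> R -> R;
  Fs : R -> R -> R; Ft : R -> R -> R;
  Gs : R -> R -> R; Gt : R -> R -> R;
  Ett : R -> R -> R; Fst : R -> R -> R; Gss : R -> R -> R;
  j_xs : vdS n x xs; j_xt : vdT n x xt;
  j_xss : vdS n xs xss; j_xst : vdT n xs xst; j_xtt : vdT n xt xtt;
  j_Es : dS (fun s t => dot n (xs s t) (xs s t)) Es;
  j_Et : dT (fun s t => dot n (xs s t) (xs s t)) Et;
  j_Fs : dS (fun s t => dot n (xs s t) (xt s t)) Fs;
  j_Ft : dT (fun s t => dot n (xs s t) (xt s t)) Ft;
  j_Gs : dS (fun s t => dot n (xt s t) (xt s t)) Gs;
  j_Gt : dT (fun s t => dot n (xt s t) (xt s t)) Gt;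
  j_Ett : dT Et Ett; j_Fst : dT Fs Fst; j_Gss : dS Gs Gss
}.

Arguments xs {n x}. Arguments xt {n x}. Arguments xss {n x}.
Arguments xst {n x}. Arguments xtt {n x}.
Arguments Es {n x}. Arguments Et {n x}. Arguments Fs {n x}.
Arguments Ft {n x}. Arguments Gs {n x}. Arguments Gt {n x}.
Arguments Ett {n x}. Arguments Fst {n x}. Arguments Gss {n x}.

Section Geometry.
Context {n : nat} {x : R -> R -> vec} (J : Jets n x).

Definition fE s t := dot n (xs J s t) (xs J s t).
Definition fF s t := dot n (xs J s t) (xt J s t).
Definition fG s t := dot n (xt J s t) (xt J s t).
Definition fdet s t := fE s t * fG s t - fF s t ^ 2.

(** Projection onto the normal space of the surface inside S^{n-1}
    (orthogonal complement of span{x_s, x_t, x}; x is a unit vector). *)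
Definition nperp (s t : R) (v : vec) : vec :=
  let a1 := dot n v (xs J s t) in
  let a2 := dot n v (xt J s t) in
  fun k => v k
    - (fG s t * a1 - fF s t * a2) / fdet s t * xs J s t k
    - (fE s t * a2 - fF s t * a1) / fdet s t * xt J s t k
    - dot n v (x s t) * x s t k.

(** Second fundamental form of x in the sphere, and mean curvature vector
    H = (1/2) g^{ij} II_{ij}. *)
Definition II11 s t := nperp s t (xss J s t).
Definition II12 s t := nperp s t (xst J s t).
Definition II22 s t := nperp s t (xtt J s t).
Definition Hvec (s t : R) : vec :=
  fun k => / 2 * (fG s t * II11 s t k - 2 * fF s t * II12 s t k
                  + fE s t * II22 s t k) / fdet s t.

Definition det3 (a11 a12 a13 a21 a22 a23 a31 a32 a33 : R) : R :=
  a11 * (a22 * a33 - a23 * a32) - a12 * (a21 * a33 - a23 * a31)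
  + a13 * (a21 * a32 - a22 * a31).

(** Gauss curvature of the induced metric (Brioschi formula). *)
Definition gaussK (s t : R) : R :=
  let E := fE s t in let F := fF s t in let G := fG s t in
  (det3 (- / 2 * Ett J s t + Fst J s t - / 2 * Gss J s t)
        (/ 2 * Es J s t) (Fs J s t - / 2 * Et J s t)
        (Ft J s t - / 2 * Gs J s t) E F
        (/ 2 * Gt J s t) F G
   - det3 0 (/ 2 * Et J s t) (/ 2 * Gs J s t)
          (/ 2 * Et J s t) E F
          (/ 2 * Gs J s t) F G) / (fdet s t) ^ 2.

Definition willmore_density (s t : R) : R :=
  (dot n (Hvec s t) (Hvec s t) - gaussK s t + 1) * sqrt (fdet s t).

End Geometry.

Definition IsIntegral2 (f : R -> R -> R) (a b c d I : R) : Prop :=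
  exists (pri : forall t, Riemann_integrable (fun s => f s t) a b)
         (pro : Riemann_integrable (fun t => RiemannInt (pri t)) c d),
    RiemannInt pro = I.

(** W(x) = I over the fundamental domain [0,L]^2 of a doubly periodic
    parametrization. *)
Definition Willmore_is {n : nat} {x : R -> R -> vec} (J : Jets n x)
  (L W : R) : Prop :=
  IsIntegral2 (willmore_density J) 0 L 0 L W.

(* Main.v *)
Require Import Defs.
From Stdlib Require Import Reals Lra Lia FunctionalExtensionality.
From Coquelicot Require Import Coquelicot.
Open Scope R_scope.

Definition gp (a s : R) : vec := fun k => match k with
  | O => - sin (s / a) | S O => cos (s / a) | _ => 0 end.
Definition gpp (a s : R) : vec := fun k => match k with
  | O => - (cos (s / a) / a) | S O => - (sin (s / a) / a) | _ => 0 end.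
Definition T (u v : vec) : vec := fun k => u (Nat.div k 3) * v (Nat.modulo k 3).

Lemma dgamma a i x : a <> 0 -> derivable_pt_lim (fun y => gamma_a a y i) x (gp a x i).
Proof.
  intro Ha; destruct i as [|[|[|i]]]; simpl; try apply derivable_pt_lim_const;
  apply is_derive_Reals; auto_derive; auto; unfold Rdiv; field; auto.
Qed.

Lemma dgp a i x : a <> 0 -> derivable_pt_lim (fun y => gp a y i) x (gpp a x i).
Proof.
  intro Ha; destruct i as [|[|[|i]]]; simpl; try apply derivable_pt_lim_const;
  apply is_derive_Reals; auto_derive; auto; unfold Rdiv; field; auto.
Qed.

Lemma dmulc f l x c : derivable_pt_lim f x l -> derivable_pt_lim (fun y => f y * c) x (l * c).
Proof. intro H. pose proof (derivable_pt_lim_scal f c x l H) as H1.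
  unfold mult_real_fct in H1.
  replace (fun y => f y * c) with (fun y => c * f y) by (apply functional_extensionality; intro; ring).
  replace (l*c) with (c*l) by ring. exact H1. Qed.
Lemma dcmul f l x c : derivable_pt_lim f x l -> derivable_pt_lim (fun y => c * f y) x (c * l).
Proof. intro H. exact (derivable_pt_lim_scal f c x l H). Qed.

Lemma dot_ext n u v u' v' : (forall k, (k < n)%nat -> u k = u' k) ->
  (forall k, (k < n)%nat -> v k = v' k) -> dot n u v = dot n u' v'.
Proof.
  unfold dot; induction n; intros Hu Hv; simpl; auto.
  rewrite IHn by (intros; auto). rewrite (Hu n), (Hv n) by lia. reflexivity.
Qed.

Lemma dotT u v u' v' : dot 9 (T u v) (T u' v') = dot 3 u u' * dot 3 v v'.
Proof. unfold dot, T; simpl. ring. Qed.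

Lemma dotH c g d h :
  dot 9 (fun k => / 2 * (T c h k + T g d k + 2 * T g h k))
        (fun k => / 2 * (T c h k + T g d k + 2 * T g h k)) =
  / 4 * (dot 3 c c * dot 3 h h + dot 3 g g * dot 3 d d + 4 * dot 3 g g * dot 3 h h
         + 2 * dot 3 c g * dot 3 h d + 4 * dot 3 c g * dot 3 h h + 4 * dot 3 g g * dot 3 d h).
Proof. unfold dot, T; simpl. field. Qed.

Section Vals.
Variable a : R.
Hypothesis Ha : 0 < a <= 1.
Lemma gg s : dot 3 (gamma_a a s) (gamma_a a s) = 1.
Proof. unfold dot; simpl. rewrite sqrt_sqrt by nra.
  pose proof (sin2_cos2 (s/a)) as H; unfold Rsqr in *.
  transitivity (a^2*(sin (s/a) * sin (s/a) + cos (s/a) * cos (s/a)) + (1 - a^2)); [ring|]. rewrite H; ring. Qed.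
Lemma gpgp s : dot 3 (gp a s) (gp a s) = 1.
Proof. unfold dot; simpl.
  pose proof (sin2_cos2 (s/a)); unfold Rsqr in *. nra. Qed.
Lemma gpg s : dot 3 (gp a s) (gamma_a a s) = 0.
Proof. unfold dot; simpl. ring. Qed.
Lemma ggp s : dot 3 (gamma_a a s) (gp a s) = 0.
Proof. unfold dot; simpl. ring. Qed.
Lemma gppg s : dot 3 (gpp a s) (gamma_a a s) = -1.
Proof. unfold dot; simpl.
  pose proof (sin2_cos2 (s/a)); unfold Rsqr in *.
  transitivity (-(sin (s / a) * sin (s / a) + cos (s / a) * cos (s / a))); [field; lra|]. lra. Qed.
Lemma ggpp s : dot 3 (gamma_a a s) (gpp a s) = -1.
Proof. rewrite <- (gppg s). unfold dot; simpl; ring. Qed.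
Lemma gppgp s : dot 3 (gpp a s) (gp a s) = 0.
Proof. unfold dot; simpl. field. lra. Qed.
Lemma gppgpp s : dot 3 (gpp a s) (gpp a s) = / a ^ 2.
Proof. unfold dot; simpl.
  pose proof (sin2_cos2 (s/a)); unfold Rsqr in *.
  transitivity ((sin (s / a) * sin (s / a) + cos (s / a) * cos (s / a)) / a^2); [field; lra|].
  rewrite H. field. lra. Qed.
End Vals.

Lemma dT1 (u u' : R -> vec) (v : vec) k s :
  (forall i x, derivable_pt_lim (fun y => u y i) x (u' x i)) ->
  derivable_pt_lim (fun y => T (u y) v k) s (T (u' s) v k).
Proof. intro H; unfold T; apply dmulc; apply H. Qed.
Lemma dT2 (u : vec) (v v' : R -> vec) k s :
  (forall i x, derivable_pt_lim (fun y => v y i) x (v' x i)) ->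
  derivable_pt_lim (fun y => T u (v y) k) s (T u (v' s) k).
Proof. intro H; unfold T; apply dcmul; apply H. Qed.
Lemma dlim_ext f g x l : (forall y, f y = g y) -> derivable_pt_lim g x l -> derivable_pt_lim f x l.
Proof. intros H H'. replace f with g; auto. apply functional_extensionality; intro; auto. Qed.
Lemma dlim_cst f x c l : (forall y, f y = c) -> derivable_pt_lim f x l -> l = 0.
Proof. intros H H'. apply (uniqueness_limite f x); auto.
  apply (dlim_ext f (fun _ => c)); auto. apply derivable_pt_lim_const. Qed.

Section WithJ.
Variable a : R.
Hypothesis Ha : 0 < a <= 1.
Variable J : Jets 9 (y_a a).
Let an0 : a <> 0. Proof. lra. Qed.
Let dg : forall i x, derivable_pt_lim (fun y => gamma_a a y i) x (gp a x i).
Proof. intros; apply dgamma; auto. Qed.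
Let dgp' : forall i x, derivable_pt_lim (fun y => gp a y i) x (gpp a x i).
Proof. intros; apply dgp; auto. Qed.

Lemma xs_eq k : (k < 9)%nat -> forall s t, xs J s t k = T (gp a s) (gamma_a a t) k.
Proof. intros Hk s t. apply (uniqueness_limite (fun u => y_a a u t k) s).
  exact (j_xs _ _ J k Hk s t). apply (dT1 (gamma_a a) (gp a)); auto. Qed.
Lemma xt_eq k : (k < 9)%nat -> forall s t, Defs.xt J s t k = T (gamma_a a s) (gp a t) k.
Proof. intros Hk s t. apply (uniqueness_limite (fun u => y_a a s u k) t).
  exact (Defs.j_xt _ _ J k Hk s t). apply (dT2 _ (gamma_a a) (gp a)); auto. Qed.
Lemma xss_eq k : (k < 9)%nat -> forall s t, xss J s t k = T (gpp a s) (gamma_a a t) k.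
Proof. intros Hk s t. apply (uniqueness_limite (fun u => xs J u t k) s).
  exact (j_xss _ _ J k Hk s t). eapply dlim_ext. intro; apply xs_eq; auto.
  apply (dT1 (gp a) (gpp a)); auto. Qed.
Lemma xst_eq k : (k < 9)%nat -> forall s t, xst J s t k = T (gp a s) (gp a t) k.
Proof. intros Hk s t. apply (uniqueness_limite (fun u => xs J s u k) t).
  exact (j_xst _ _ J k Hk s t). eapply dlim_ext. intro; apply xs_eq; auto.
  apply (dT2 _ (gamma_a a) (gp a)); auto. Qed.
Lemma xtt_eq k : (k < 9)%nat -> forall s t, xtt J s t k = T (gamma_a a s) (gpp a t) k.
Proof. intros Hk s t. apply (uniqueness_limite (fun u => Defs.xt J s u k) t).
  exact (j_xtt _ _ J k Hk s t). eapply dlim_ext. intro; apply xt_eq; auto.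
  apply (dT2 _ (gp a) (gpp a)); auto. Qed.

Ltac dtac l1 l2 := rewrite (dot_ext _ _ _ _ _ l1 l2); rewrite dotT.

Lemma fE_val s t : fE J s t = 1.
Proof. unfold fE. rewrite (dot_ext _ _ _ _ _ (fun k h => xs_eq k h s t) (fun k h => xs_eq k h s t)).
  rewrite dotT, gpgp, gg; auto; ring. Qed.
Lemma fF_val s t : fF J s t = 0.
Proof. unfold fF. rewrite (dot_ext _ _ _ _ _ (fun k h => xs_eq k h s t) (fun k h => xt_eq k h s t)).
  rewrite dotT, gpg, ggp; auto; ring. Qed.
Lemma fG_val s t : fG J s t = 1.
Proof. unfold fG. rewrite (dot_ext _ _ _ _ _ (fun k h => xt_eq k h s t) (fun k h => xt_eq k h s t)).
  rewrite dotT, gpgp, gg; auto; ring. Qed.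
Lemma fdet_val s t : fdet J s t = 1.
Proof. unfold fdet. rewrite fE_val, fF_val, fG_val. ring. Qed.

Lemma Es_val s t : Es J s t = 0.
Proof. apply (dlim_cst (fun u => dot 9 (xs J u t) (xs J u t)) s 1).
  intro y; exact (fE_val y t). exact (j_Es _ _ J s t). Qed.
Lemma Et_val s t : Et J s t = 0.
Proof. apply (dlim_cst (fun u => dot 9 (xs J s u) (xs J s u)) t 1).
  intro y; exact (fE_val s y). exact (j_Et _ _ J s t). Qed.
Lemma Fs_val s t : Fs J s t = 0.
Proof. apply (dlim_cst (fun u => dot 9 (xs J u t) (Defs.xt J u t)) s 0).
  intro y; exact (fF_val y t). exact (j_Fs _ _ J s t). Qed.
Lemma Ft_val s t : Ft J s t = 0.
Proof. apply (dlim_cst (fun u => dot 9 (xs J s u) (Defs.xt J s u)) t 0).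
  intro y; exact (fF_val s y). exact (j_Ft _ _ J s t). Qed.
Lemma Gs_val s t : Gs J s t = 0.
Proof. apply (dlim_cst (fun u => dot 9 (Defs.xt J u t) (Defs.xt J u t)) s 1).
  intro y; exact (fG_val y t). exact (j_Gs _ _ J s t). Qed.
Lemma Gt_val s t : Gt J s t = 0.
Proof. apply (dlim_cst (fun u => dot 9 (Defs.xt J s u) (Defs.xt J s u)) t 1).
  intro y; exact (fG_val s y). exact (j_Gt _ _ J s t). Qed.
Lemma Ett_val s t : Ett J s t = 0.
Proof. apply (dlim_cst (fun u => Et J s u) t 0).
  intro y; exact (Et_val s y). exact (j_Ett _ _ J s t). Qed.
Lemma Fst_val s t : Fst J s t = 0.
Proof. apply (dlim_cst (fun u => Fs J s u) t 0).
  intro y; exact (Fs_val s y). exact (j_Fst _ _ J s t). Qed.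
Lemma Gss_val s t : Gss J s t = 0.
Proof. apply (dlim_cst (fun u => Gs J u t) s 0).
  intro y; exact (Gs_val y t). exact (j_Gss _ _ J s t). Qed.

Lemma gaussK_val s t : gaussK J s t = 0.
Proof. unfold gaussK. rewrite fE_val, fF_val, fG_val, fdet_val, Es_val, Et_val, Fs_val,
  Ft_val, Gs_val, Gt_val, Ett_val, Fst_val, Gss_val. unfold det3. field. Qed.

Lemma Hvec_eq s t k : (k < 9)%nat -> Hvec J s t k =
  / 2 * (T (gpp a s) (gamma_a a t) k + T (gamma_a a s) (gpp a t) k + 2 * T (gamma_a a s) (gamma_a a t) k).
Proof. intro Hk.
  assert (A1 : dot 9 (xss J s t) (xs J s t) = 0).
  { rewrite (dot_ext _ _ _ _ _ (fun k h => xss_eq k h s t) (fun k h => xs_eq k h s t)).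
    rewrite dotT, gppgp, gg; auto; ring. }
  assert (A2 : dot 9 (xss J s t) (Defs.xt J s t) = 0).
  { rewrite (dot_ext _ _ _ _ _ (fun k h => xss_eq k h s t) (fun k h => xt_eq k h s t)).
    rewrite dotT, gppg, ggp; auto; ring. }
  assert (A3 : dot 9 (xss J s t) (y_a a s t) = -1).
  { rewrite (dot_ext 9 (xss J s t) (y_a a s t) (T (gpp a s) (gamma_a a t)) (T (gamma_a a s) (gamma_a a t))
      (fun k h => xss_eq k h s t) (fun k h => eq_refl)).
    rewrite dotT, gppg, gg; auto; ring. }
  assert (B1 : dot 9 (xtt J s t) (xs J s t) = 0).
  { rewrite (dot_ext _ _ _ _ _ (fun k h => xtt_eq k h s t) (fun k h => xs_eq k h s t)).
    rewrite dotT, gppg, ggp; auto; ring. }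
  assert (B2 : dot 9 (xtt J s t) (Defs.xt J s t) = 0).
  { rewrite (dot_ext _ _ _ _ _ (fun k h => xtt_eq k h s t) (fun k h => xt_eq k h s t)).
    rewrite dotT, gppgp, gg; auto; ring. }
  assert (B3 : dot 9 (xtt J s t) (y_a a s t) = -1).
  { rewrite (dot_ext 9 (xtt J s t) (y_a a s t) (T (gamma_a a s) (gpp a t)) (T (gamma_a a s) (gamma_a a t))
      (fun k h => xtt_eq k h s t) (fun k h => eq_refl)).
    rewrite dotT, gppg, gg; auto; ring. }
  unfold Hvec, II11, II22, nperp. cbv beta zeta.
  rewrite A1, A2, A3, B1, B2, B3, fE_val, fF_val, fG_val, fdet_val.
  rewrite (xss_eq k Hk), (xtt_eq k Hk).
  change (y_a a s t k) with (T (gamma_a a s) (gamma_a a t) k). field.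
Qed.

Lemma density_val s t : willmore_density J s t = (/ a ^ 2 + 1) / 2.
Proof. unfold willmore_density.
  rewrite (dot_ext _ _ _ _ _ (fun k h => Hvec_eq s t k h) (fun k h => Hvec_eq s t k h)).
  rewrite dotH, !gppgpp, !gg, !gppg, !ggpp, gaussK_val, fdet_val, sqrt_1; auto. field. lra. Qed.
End WithJ.

Definition mkJets (a : R) (Ha : 0 < a <= 1) : Jets 9 (y_a a).
Proof.
  assert (an0 : a <> 0) by lra.
  assert (dg : forall i x, derivable_pt_lim (fun y => gamma_a a y i) x (gp a x i)) by (intros; apply dgamma; auto).
  assert (dgp' : forall i x, derivable_pt_lim (fun y => gp a y i) x (gpp a x i)) by (intros; apply dgp; auto).
  refine (Build_Jets 9 (y_a a) (fun s t => T (gp a s) (gamma_a a t)) (fun s t => T (gamma_a a s) (gp a t))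
    (fun s t => T (gpp a s) (gamma_a a t)) (fun s t => T (gp a s) (gp a t)) (fun s t => T (gamma_a a s) (gpp a t))
    (fun _ _ => 0) (fun _ _ => 0) (fun _ _ => 0) (fun _ _ => 0) (fun _ _ => 0) (fun _ _ => 0)
    (fun _ _ => 0) (fun _ _ => 0) (fun _ _ => 0) _ _ _ _ _ _ _ _ _ _ _ _ _ _).
  all: try (intros k Hk s t; first [apply (dT1 _ _ _ k s) | apply (dT2 _ _ _ k t)]; auto; fail).
  all: try (intros s t; apply derivable_pt_lim_const; fail).
  all: intros s t.
  - apply (dlim_ext _ (fun _ => 1)); [intro; rewrite dotT, gpgp, gg; auto; ring | apply derivable_pt_lim_const].
  - apply (dlim_ext _ (fun _ => 1)); [intro; rewrite dotT, gpgp, gg; auto; ring | apply derivable_pt_lim_const].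
  - apply (dlim_ext _ (fun _ => 0)); [intro; rewrite dotT, gpg, ggp; auto; ring | apply derivable_pt_lim_const].
  - apply (dlim_ext _ (fun _ => 0)); [intro; rewrite dotT, gpg, ggp; auto; ring | apply derivable_pt_lim_const].
  - apply (dlim_ext _ (fun _ => 1)); [intro; rewrite dotT, gpgp, gg; auto; ring | apply derivable_pt_lim_const].
  - apply (dlim_ext _ (fun _ => 1)); [intro; rewrite dotT, gpgp, gg; auto; ring | apply derivable_pt_lim_const].
Defined.

Lemma int_cst f c a b : (forall x, f x = c) -> {pr : Riemann_integrable f a b | RiemannInt pr = c * (b - a)}.
Proof. intro H. assert (E : f = fct_cte c) by (apply functional_extensionality; exact H).
  subst f. exists (RiemannInt_P14 a b c). apply RiemannInt_P15. Qed.

Lemma gamma_per a s i : 0 < a -> gamma_a a (s + 2 * PI * a) i = gamma_a a s i.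
Proof. intro Ha. destruct i as [|[|[|i]]]; simpl; auto;
  replace ((s + 2 * PI * a) / a) with (s / a + 2 * PI) by (field; lra).
  - rewrite cos_plus, cos_2PI, sin_2PI; ring.
  - rewrite sin_plus, cos_2PI, sin_2PI; ring.
Qed.

Theorem mainTheorem5 :
  (forall a : R, 0 < a <= 1 ->
     let L := 2 * PI * a in
     (forall s t k, y_a a (s + L) t k = y_a a s t k /\ y_a a s (t + L) k = y_a a s t k) /\
     (forall s t, dot 9 (y_a a s t) (y_a a s t) = 1) /\
     inhabited (Jets 9 (y_a a)) /\
     (forall J : Jets 9 (y_a a),
        (forall s t, 0 < fdet J s t) /\
        (forall s t, gaussK J s t = 0) /\
        Willmore_is J L (2 * PI ^ 2 * (1 + a ^ 2))) /\
     2 * PI ^ 2 * (1 + a ^ 2) > 2 * PI ^ 2) /\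
  limit1_in (fun a => 2 * PI ^ 2 * (1 + a ^ 2)) (fun a => 0 < a <= 1)
            (2 * PI ^ 2) 0.
Proof.
  split.
  - intros a Ha L. split; [|split; [|split; [|split]]].
    + intros s t k; unfold y_a, tensor3, L; split; rewrite gamma_per; auto; lra.
    + intros s t. change (y_a a s t) with (T (gamma_a a s) (gamma_a a t)).
      rewrite dotT, !gg; auto; ring.
    + exact (inhabits (mkJets a Ha)).
    + intro J. split; [|split].
      * intros; rewrite fdet_val; auto; lra.
      * intros; apply gaussK_val; auto.
      * unfold Willmore_is, IsIntegral2.
        set (c := (/ a ^ 2 + 1) / 2).
        pose (pri := fun t => proj1_sig (int_cst (fun s => willmore_density J s t) c 0 L
                         (fun s => density_val a Ha J s t))).
        assert (Hp : forall t, RiemannInt (pri t) = c * (L - 0)).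
        { intro t. unfold pri. apply (proj2_sig (int_cst _ _ _ _ _)). }
        destruct (int_cst (fun t => RiemannInt (pri t)) (c * (L - 0)) 0 L Hp) as [pro Hpro].
        exists pri, pro. rewrite Hpro. unfold c, L. field. lra.
    + assert (0 < PI ^ 2 * a ^ 2) by (pose proof PI_RGT_0; apply Rmult_lt_0_compat; apply pow_lt; lra). lra.
  - unfold limit1_in, limit_in. intros eps Heps. simpl. unfold R_dist.
    pose proof PI_RGT_0 as Hpi.
    assert (H2 : 0 < 2 * PI ^ 2) by nra.
    exists (Rmin 1 (eps / (2 * PI ^ 2))). split.
    + apply Rmin_glb_lt; [lra|]. apply Rdiv_lt_0_compat; lra.
    + intros x [[Hx0 Hx1] Hd].
      rewrite Rminus_0_r, Rabs_right in Hd by lra.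
      assert (Hd1 : x < 1) by (eapply Rlt_le_trans; [exact Hd| apply Rmin_l]).
      assert (Hd2 : x < eps / (2 * PI ^ 2)) by (eapply Rlt_le_trans; [exact Hd| apply Rmin_r]).
      replace (2 * PI ^ 2 * (1 + x ^ 2) - 2 * PI ^ 2) with (2 * PI ^ 2 * x ^ 2) by ring.
      rewrite Rabs_right by nra.
      assert (2 * PI ^ 2 * x < eps).
      { apply (Rmult_lt_compat_l (2 * PI ^ 2)) in Hd2; auto.
        replace (2 * PI ^ 2 * (eps / (2 * PI ^ 2))) with eps in Hd2 by (field; lra). exact Hd2. }
      nra.
Qed.
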